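(* For all integers $q\ge1$ and $t\ge0$, $\mathsf{INDEL}_{\mathrm{det}}(q,t)\le \mathsf{DEL}_{\mathrm{det}}(q,t)=\mathsf{INS}_{\mathrm{det}}(q,t)=\mathsf{INS}_{\mathrm{cor}}(q,t).$
   Context: Let $[q]=\{0,1,\dots,q-1\}$. For $1\le m\le q$, a partial permutation of length $m$ over $[q]$ is a sequence $\pi=(\pi_1,\dots,\pi_m)$ of $m$ pairwise distinct elements of $[q]$. Let $\mathcal{S}_m^q$ be the set of those of length $m$ and $\mathcal{S}_{\mathrm{all}}^q=\bigcup_{m=1}^{q}\mathcal{S}_m^q$. A code is any subset of $\mathcal{S}_{\mathrm{all}}^q$. Juxtaposition $\omega\pi$ denotes concatenation with $\omega$ on the left. Tail deletions: for $\pi$ of length $m$ and integer $j\ge 0$, $\pi_{\downarrow j}=(\pi_{k+1},\dots,\pi_m)$ with $k=\min(j,m-1)$; $\mathcal{B}_{\mathrm{del}}^t(\pi)=\{\pi_{\downarrow j}:0\le j\le t\}$. Tail insertions: $\mathcal{B}_{\mathrm{ins}}^t(\pi)$ is the set of all $\omega\pi\in\mathcal{S}_{\mathrm{all}}^q$ with $\omega$ a (possibly empty) sequence of at most $t$ elements of $[q]$. Tail indels: $\mathcal{B}_{\mathrm{indel}}^t(\pi)$ is the set of partial permutations obtainable from $\pi$ by at most $t$ operations, each either a single tail deletion (removing the first symbol of a partial permutation of length at least $2$) or a single tail insertion (prepending an element of $[q]$ not already occurring). For $X\in\{\mathrm{del},\mathrm{ins},\mathrm{indel}\}$, a code $\mathcal{C}$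 is $t$-tail-$X$-detecting if $\mathcal{C}\cap\mathcal{B}_X^t(\pi)=\{\pi\}$ for all $\pi\in\mathcal{C}$, and $t$-tail-$X$-correcting if $\mathcal{B}_X^t(\pi_1)\cap\mathcal{B}_X^t(\pi_2)=\emptyset$ for all distinct $\pi_1,\pi_2\in\mathcal{C}$. $\mathsf{DEL}_{\mathrm{det}}(q,t)$, $\mathsf{INS}_{\mathrm{det}}(q,t)$, $\mathsf{INDEL}_{\mathrm{det}}(q,t)$ denote the maximum sizes of $t$-tail-deletion-, insertion-, indel-detecting codes in $\mathcal{S}_{\mathrm{all}}^q$, and $\mathsf{INS}_{\mathrm{cor}}(q,t)$ the maximum size of a $t$-tail-insertion-correcting code. *)

(* Defs.v *)
(* Partial permutations over [q] = {0..q-1} are represented as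
   seq nat; the first element of the sequence is pi_1 (the "tail" end, where
   tail deletions/insertions act). Codes are finite duplicate-free lists of
   partial permutations (i.e. finite subsets of S_all^q). *)
From mathcomp Require Import all_boot.
Set Implicit Arguments. Unset Strict Implicit. Unset Printing Implicit Defensive.

Fixpoint words (q m : nat) : seq (seq nat) :=
  match m with
  | 0 => [:: [::]]
  | m'.+1 => [seq x :: w | x <- iota 0 q, w <- words q m']
  end.

Definition pperms (q : nat) : seq (seq nat) :=
  [seq s <- flatten [seq words q m | m <- iota 1 q] | uniq s].

(* all sub-lists of a list; for a duplicate-free list these are all its subsets *)
Fixpoint subseqs (T : Type) (s : seq T) : seq (seq T) :=
  match s with
  | [::] => [:: [::]]
  | x :: s' => let r := subseqs s' in r ++ [seq x :: c | c <- r]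
  end.

Definition in_del (t : nat) (pi sigma : seq nat) : bool :=
  has (fun j => sigma == drop (minn j (size pi).-1) pi) (iota 0 t.+1).

Definition in_ins (q t : nat) (pi sigma : seq nat) : bool :=
  [&& sigma \in pperms q, size pi <= size sigma, size sigma <= size pi + t
    & drop (size sigma - size pi) sigma == pi].

Definition indel_nbrs (q : nat) (s : seq nat) : seq (seq nat) :=
  (if 1 < size s then [:: behead s] else [::]) ++
  [seq x :: s | x <- iota 0 q & x \notin s].

Fixpoint in_indel (q t : nat) (pi sigma : seq nat) : bool :=
  (sigma == pi) ||
  match t with
  | 0 => false
  | t'.+1 => has (fun tau => in_indel q t' tau sigma) (indel_nbrs q pi)
  end.

Definition detecting (ball : seq nat -> seq nat -> bool) (C : seq (seq nat)) : bool :=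
  all (fun p => all (fun s => ball p s ==> (s == p)) C) C.

(* t-tail-insertion-correcting: balls of distinct codewords are disjoint
   (balls are subsets of S_all^q, so it suffices to range over pperms q) *)
Definition ins_correcting (q t : nat) (C : seq (seq nat)) : bool :=
  all (fun p1 => all (fun p2 => (p1 != p2) ==>
        ~~ has (fun s => in_ins q t p1 s && in_ins q t p2 s) (pperms q)) C) C.

Definition max_code (q : nat) (P : seq (seq nat) -> bool) : nat :=
  \max_(C <- subseqs (pperms q) | P C) size C.

Definition DEL_det (q t : nat) : nat := max_code q (detecting (in_del t)).
Definition INS_det (q t : nat) : nat := max_code q (detecting (in_ins q t)).
Definition INDEL_det (q t : nat) : nat := max_code q (detecting (in_indel q t)).
Definition INS_cor (q t : nat) : nat := max_code q (ins_correcting q t).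

(* Main.v *)
Require Import Defs.
From mathcomp Require Import all_boot.
From mathcomp Require Import zify.

Lemma max_code_mono q (P Q : pred (seq (seq nat))) :
  (forall C, C \in subseqs (pperms q) -> P C -> Q C) ->
  max_code q P <= max_code q Q.
Proof.
move=> H; rewrite /max_code; apply/bigmax_leqP_seq => C hC PC.
by apply: leq_bigmax_seq => //; apply: H.
Qed.

Lemma mem_subseqs (T : eqType) (s C : seq T) :
  C \in subseqs s -> {subset C <= s}.
Proof.
elim: s C => [|x s IH] C /=; first by rewrite inE => /eqP -> .
rewrite mem_cat => /orP [/IH h y /h|/mapP [c /IH h ->] y]; first by rewrite inE orbC => ->.
by rewrite !inE => /orP [->|/h ->] //; rewrite orbT.
Qed.

Lemma words_nil q m : [::] \in words q m -> m = 0.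
Proof.
case: m => //= m /allpairsPdep [x [y [_ _ H]]] //.
Qed.

Arguments words_nil {q m}.
Lemma pperms_nonnil q p : p \in pperms q -> p != [::].
Proof.
rewrite mem_filter => /andP [_ /flatten_mapP [m]].
rewrite mem_iota => /andP [h1 _] h2; apply/eqP => E; subst p.
by move: (words_nil h2) h1 => ->.
Qed.

Arguments pperms_nonnil {q p}.
Lemma indel_drop q t p k : k <= t -> k <= (size p).-1 -> in_indel q t p (drop k p).
Proof.
elim: t p k => [|t IH] p k.
  by rewrite leqn0 => /eqP -> _; rewrite drop0 /= eqxx.
case: k => [|k] hk hp; first by rewrite drop0 /= eqxx.
case: p hp => [|x [|y p]] //= hp.
apply/orP; right; rewrite /indel_nbrs /=.
by rewrite (IH (y :: p) k).
Qed.

Lemma del_indel q t p s : in_del t p s -> in_indel q t p s.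
Proof.
move=> /hasP [j]; rewrite mem_iota add0n => hj /eqP ->.
apply: indel_drop; lia.
Qed.

Lemma del_ins q t p s : p \in pperms q -> s \in pperms q ->
  in_del t p s = in_ins q t s p.
Proof.
move=> hp hs; rewrite /in_ins hp /=.
have ns := pperms_nonnil hs.
apply/idP/idP.
  move=> /hasP [j]; rewrite mem_iota add0n => hj /eqP ->.
  rewrite size_drop.
  have hk : minn j (size p).-1 <= size p by lia.
  have -> : size p - (size p - minn j (size p).-1) = minn j (size p).-1 by lia.
  rewrite eqxx andbT; apply/andP; split; lia.
move=> /and3P [h1 h2 /eqP h3]; apply/hasP; exists (size p - size s).
  by rewrite mem_iota leq0n add0n ltnS leq_subLR.
have : 0 < size s by case: s ns {hs h1 h2 h3}.
move=> h0; have -> : minn (size p - size s) (size p).-1 = size p - size s by lia.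
by rewrite h3.
Qed.

Arguments del_ins {q} t {p s}.
Arguments mem_subseqs {T s C}.
Lemma ins_refl q t s : s \in pperms q -> in_ins q t s s.
Proof. by move=> h; rewrite /in_ins h leqnn leq_addr subnn drop0 eqxx. Qed.

Lemma ins_comb q t p1 p2 x : in_ins q t p1 x -> in_ins q t p2 x ->
  size p1 <= size p2 -> p2 \in pperms q -> in_ins q t p1 p2.
Proof.
rewrite /in_ins => /and4P [_ a1 b1 /eqP c1] /and4P [_ a2 b2 /eqP c2] le hp2.
rewrite hp2 le /=; apply/andP; split; first lia.
rewrite -c2 drop_drop -c1; apply/eqP; congr drop.
move: (f_equal size c2) (f_equal size c1); rewrite !size_drop; lia.
Qed.

Arguments del_indel q {t p s}.
Arguments ins_comb {q t p1 p2 x}.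
Theorem mainTheorem3 (q t : nat) (hq : 1 <= q) :
  INDEL_det q t <= DEL_det q t /\
  DEL_det q t = INS_det q t /\
  INS_det q t = INS_cor q t.
Proof.
split; [|split].
- apply: max_code_mono => C _ H.
  apply/allP => p hp; apply/allP => s hs; apply/implyP => h.
  exact: (implyP (allP (allP H p hp) s hs) (del_indel q h)).
- apply/eqP; rewrite eqn_leq; apply/andP; split; apply: max_code_mono => C hC H;
  have sub := mem_subseqs hC;
  apply/allP => p hp; apply/allP => s hs; apply/implyP => h.
  + rewrite -(del_ins t (sub _ hs) (sub _ hp)) in h.
    by rewrite eq_sym; exact: (implyP (allP (allP H s hs) p hp) h).
  + rewrite (del_ins t (sub _ hp) (sub _ hs)) in h.
    by rewrite eq_sym; exact: (implyP (allP (allP H s hs) p hp) h).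
- apply/eqP; rewrite eqn_leq; apply/andP; split; apply: max_code_mono => C hC H;
  have sub := mem_subseqs hC.
  + apply/allP => p1 hp1; apply/allP => p2 hp2; apply/implyP => ne.
    apply/hasP => [[x _ /andP [h1 h2]]].
    case: (leqP (size p1) (size p2)) => le.
      move: (implyP (allP (allP H p1 hp1) p2 hp2) (ins_comb h1 h2 le (sub _ hp2))).
      by rewrite eq_sym (negbTE ne).
    move: (implyP (allP (allP H p2 hp2) p1 hp1) (ins_comb h2 h1 (ltnW le) (sub _ hp1))).
    by rewrite (negbTE ne).
  + apply/allP => p hp; apply/allP => s hs; apply/implyP => h.
    apply/negPn/negP => ne.
    move: (implyP (allP (allP H p hp) s hs)); rewrite eq_sym ne => /(_ isT) /hasP; apply.
    exists s; first exact: sub.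
    by rewrite h ins_refl // sub.
Qed.
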